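(* Consider the Markov process on $\{0,1\}^{\{1,2,3,\dots\}}$ described in the context. It has a stationary distribution under which, for every $i\ge1$, $$P(A_i=1)=\frac{\lambda_a}{\lambda}\Bigl(\frac{\lambda}{\lambda+\delta}\Bigr)^i,\qquad P(A_i=1,A_{i+1}=1)=\frac{\lambda_a^2}{\lambda(\lambda+\delta)}\Bigl(\frac{\lambda}{\lambda+2\delta}\Bigr)^i,$$ and these are the limits as $t\to\infty$ of $P_t(A_i=1)$ and $P_t(A_i=1,A_{i+1}=1)$ from any initial distribution.
   Context: Parameters $\lambda_a,\lambda_b>0$, $\delta>0$, $\lambda=\lambda_a+\lambda_b$. A configuration is a sequence $(A_1,A_2,\dots)\in\{0,1\}^{\{1,2,\dots\}}$ ($A_i=1$: fast vehicle, $A_i=0$: slow vehicle, index $1$ being the most recently arrived). Dynamics in continuous time: at rate $\lambda_a$ an arrival occurs, whereupon the sequence is shifted ($A_{i+1}\leftarrow A_i$ for all $i\ge1$) and $A_1$ is set to $1$; at rate $\lambda_b$ the same shift occurs and $A_1$ is set to $0$; independently, each site $i$ with $A_i=1$ switches to $A_i=0$ at rate $\delta$. *)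

(* Defs.v *)
From Stdlib Require Import Reals Lra List.
Import ListNotations.
Open Scope R_scope.

(* A state of the first n sites (A_1,...,A_n) is a list of booleans of
   length n; the head is A_1 (the most recently arrived vehicle);
   true = fast, false = slow. *)

Fixpoint states (n : nat) : list (list bool) :=
  match n with
  | O => [nil]
  | S m => map (cons true) (states m) ++ map (cons false) (states m)
  end.

Definition sumL {A : Type} (f : A -> R) (l : list A) : R :=
  fold_right (fun x acc => f x + acc) 0 l.

(* arrival of a vehicle of type b: shift right, A_1 := b; the last of the
   first n sites falls out of the observed window *)
Definition shift (b : bool) (s : list bool) : list bool :=
  firstn (length s) (b :: s).

Fixpoint flips (s : list bool) : list (list bool) :=
  match s with
  | nil => nil
  | a :: s' => (if a then [false :: s'] else nil) ++ map (cons a) (flips s')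
  end.

Definition jumps (la lb d : R) (s : list bool) : list (R * list bool) :=
  (la, shift true s) :: (lb, shift false s) :: map (fun t => (d, t)) (flips s).

(* (p Q)(s): adjoint generator (Kolmogorov forward equation right-hand side)
   of the Markov chain on the first n sites *)
Definition Lstar (la lb d : R) (n : nat) (p : list bool -> R) (s : list bool) : R :=
  sumL (fun s' => sumL (fun rt => if list_eq_dec Bool.bool_dec (snd rt) s
                                  then fst rt * p s' else 0)
                       (jumps la lb d s')) (states n)
  - sumL (fun rt => fst rt) (jumps la lb d s) * p s.

Definition prob_vec (n : nat) (p : list bool -> R) : Prop :=
  (forall s, In s (states n) -> 0 <= p s) /\ sumL p (states n) = 1.

(* consistent family of finite-dimensional marginals
   (= a probability distribution on {0,1}^{1,2,...}) *)
Definition consistent_family (mu : nat -> list bool -> R) : Prop :=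
  (forall n, prob_vec n (mu n)) /\
  (forall n s, In s (states n) ->
     mu n s = mu (S n) (s ++ [true]) + mu (S n) (s ++ [false])).

(* P(A_i = 1) computed from the marginal on the first i sites (i >= 1) *)
Definition prob_fast (p : nat -> list bool -> R) (i : nat) : R :=
  sumL (fun s => if nth (pred i) s false then p i s else 0) (states i).

(* P(A_i = 1, A_{i+1} = 1) from the marginal on the first i+1 sites *)
Definition prob_fast2 (p : nat -> list bool -> R) (i : nat) : R :=
  sumL (fun s => if andb (nth (pred i) s false) (nth i s false)
                 then p (S i) s else 0) (states (S i)).

(* Main.v *)
Require Import Defs.
From Stdlib Require Import Reals Lra Lia List.
Import ListNotations.
Open Scope R_scope.


Definition conv (f : R -> R) (L : R) : Prop :=
  forall eps, eps > 0 -> exists T, forall t, t >= T -> Rabs (f t - L) < eps.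

Lemma dpl_ext (f g : R -> R) x l l' :
  derivable_pt_lim f x l -> (forall y, f y = g y) -> l = l' -> derivable_pt_lim g x l'.
Proof.
  intros H E <-. unfold derivable_pt_lim in *. intros eps He.
  destruct (H eps He) as [del Hd]. exists del. intros h h0 hh.
  rewrite <- !E. now apply Hd.
Qed.

Lemma nonincr (f f' : R -> R) T :
  (forall t, derivable_pt_lim f t (f' t)) -> (forall t, T <= t -> f' t <= 0) ->
  forall t, T <= t -> f t <= f T.
Proof.
  intros Hd Hn t Ht. destruct (Req_dec t T) as [->|Hne]; [lra|].
  destruct (MVT_cor2 f f' T t) as [c [Hc1 Hc2]]; [lra| intros; apply Hd |].
  assert (f' c <= 0) by (apply Hn; lra).
  assert (f' c * (t - T) <= 0) by nra. lra.
Qed.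

Lemma dexpK K t : derivable_pt_lim (fun u => exp (K * u)) t (K * exp (K * t)).
Proof.
  assert (H1 : derivable_pt_lim (fun u => K * u) t K).
  { apply dpl_ext with (f := mult_real_fct K id) (l := K * 1).
    apply derivable_pt_lim_scal, derivable_pt_lim_id.
    intros; reflexivity. ring. }
  apply dpl_ext with (f := comp exp (fun u => K * u)) (l := exp (K * t) * K).
  apply derivable_pt_lim_comp; auto. apply derivable_pt_lim_exp.
  intros; reflexivity. ring.
Qed.

Lemma conv_ode (y a : R -> R) K A : 0 < K ->
  (forall t, derivable_pt_lim y t (a t - K * y t)) -> conv a A -> conv y (A / K).
Proof.
  intros HK Hd Ha eps He.
  destruct (Ha (K * eps / 4)) as [T HT].
  { apply Rlt_gt. apply Rmult_lt_0_compat; [apply Rmult_lt_0_compat|]; lra. }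
  set (C := Rabs (y T - A / K) + eps / 4).
  assert (HC : 0 < C) by (unfold C; pose proof (Rabs_pos (y T - A/K)); lra).
  assert (HCa := Rle_abs (y T - A / K)).
  assert (HCb := Rle_abs (- (y T - A / K))). rewrite Rabs_Ropp in HCb.
  assert (Hda : forall t, T <= t -> Rabs (a t - A) < K * eps / 4) by (intros; apply HT; lra).
  assert (H1 := nonincr (fun t => exp (K * t) * (y t - A / K - eps / 4))
                  (fun t => exp (K * t) * (a t - A - K * eps / 4)) T).
  assert (H2 := nonincr (fun t => - (exp (K * t) * (y t - A / K + eps / 4)))
                  (fun t => - (exp (K * t) * (a t - A + K * eps / 4))) T).
  assert (Dy : forall c t, derivable_pt_lim (fun u => y u - c) t (a t - K * y t)).
  { intros c t. eapply dpl_ext. apply derivable_pt_lim_minus. apply Hd. apply (derivable_pt_lim_const c).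
    intro u; unfold minus_fct, fct_cte; reflexivity. ring. }
  assert (D1 : forall t, derivable_pt_lim (fun t => exp (K * t) * (y t - A / K - eps / 4)) t
                  (exp (K * t) * (a t - A - K * eps / 4))).
  { intro t. eapply dpl_ext. apply derivable_pt_lim_mult. apply dexpK. apply (Dy (A / K + eps/4)).
    intro u; unfold mult_fct; f_equal; ring. simpl. field. lra. }
  assert (D2 : forall t, derivable_pt_lim (fun t => - (exp (K * t) * (y t - A / K + eps / 4))) t
                  (- (exp (K * t) * (a t - A + K * eps / 4)))).
  { intro t. eapply dpl_ext. apply derivable_pt_lim_opp. apply derivable_pt_lim_mult. apply dexpK. apply (Dy (A / K - eps/4)).
    intro u; unfold opp_fct, mult_fct; f_equal; f_equal; ring. simpl. field. lra. }
  specialize (H1 D1). specialize (H2 D2).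
  assert (N1 : forall t, T <= t -> exp (K * t) * (a t - A - K * eps / 4) <= 0).
  { intros t Ht. specialize (Hda t Ht). apply Rabs_def2 in Hda. pose proof (exp_pos (K*t)). nra. }
  assert (N2 : forall t, T <= t -> - (exp (K * t) * (a t - A + K * eps / 4)) <= 0).
  { intros t Ht. specialize (Hda t Ht). apply Rabs_def2 in Hda. pose proof (exp_pos (K*t)). nra. }
  specialize (H1 N1). specialize (H2 N2). simpl in H1, H2.
  exists (T + 4 * C / (K * eps)).
  intros t Ht.
  assert (Hq : 0 <= 4 * C / (K * eps)).
  { apply Rlt_le. apply Rdiv_lt_0_compat; [lra| apply Rmult_lt_0_compat; lra]. }
  assert (HtT : T <= t) by lra.
  specialize (H1 t HtT). specialize (H2 t HtT).
  assert (EX : exp (K * t) = exp (K * T) * exp (K * (t - T))).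
  { rewrite <- exp_plus. f_equal. ring. }
  set (X := exp (K * (t - T))) in *.
  assert (HX : 1 + K * (t - T) <= X) by apply exp_ineq1_le.
  assert (HX2 : K * (t - T) >= 4 * C / eps).
  { assert (K * (t - T) >= K * (4 * C / (K * eps))) by (apply Rle_ge, Rmult_le_compat_l; lra).
    replace (K * (4 * C / (K * eps))) with (4 * C / eps) in H by (field; lra). lra. }
  assert (HX3 : X * eps > 4 * C).
  { assert (4 * C / eps * eps = 4 * C) by (field; lra). nra. }
  rewrite EX in H1, H2. pose proof (exp_pos (K * T)) as E0.
  assert (G1 : X * (y t - A / K - eps / 4) <= y T - A / K - eps / 4).
  { apply Rmult_le_reg_l with (exp (K * T)); auto. nra. }
  assert (G2 : X * (y t - A / K + eps / 4) >= y T - A / K + eps / 4).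
  { apply Rle_ge, Rmult_le_reg_l with (exp (K * T)); auto. nra. }
  assert (HCd : C = Rabs (y T - A / K) + eps / 4) by reflexivity.
  apply Rabs_def1.
  - destruct (Rlt_dec (y t - A / K) (eps / 2)); [lra|]. exfalso. match goal with H : ~ _ |- _ => apply Rnot_lt_le in H end.
    assert (X * (eps/4) <= X * (y t - A / K - eps / 4)) by (apply Rmult_le_compat_l; [assert (0 <= 4 * C / eps) by (apply Rlt_le, Rdiv_lt_0_compat; lra); lra | lra]). lra.
  - destruct (Rlt_dec (- (eps / 2)) (y t - A / K)); [lra|]. exfalso. match goal with H : ~ _ |- _ => apply Rnot_lt_le in H end.
    assert (X * (y t - A / K + eps / 4) <= X * (- (eps/4))) by (apply Rmult_le_compat_l; [assert (0 <= 4 * C / eps) by (apply Rlt_le, Rdiv_lt_0_compat; lra); lra | lra]). lra.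
Qed.

Lemma sumL_nil {A} (f : A -> R) : sumL f [] = 0.
Proof. reflexivity. Qed.
Lemma sumL_cons {A} (f : A -> R) x l : sumL f (x :: l) = f x + sumL f l.
Proof. reflexivity. Qed.
Lemma sumL_app {A} (f : A -> R) l1 l2 : sumL f (l1 ++ l2) = sumL f l1 + sumL f l2.
Proof. induction l1; simpl; [ring|]. unfold sumL in *; simpl in *; rewrite IHl1; ring. Qed.
Lemma sumL_map {A B} (f : B -> R) (g : A -> B) l : sumL f (map g l) = sumL (fun x => f (g x)) l.
Proof. induction l; simpl; auto. unfold sumL in *; simpl; rewrite IHl; ring. Qed.
Lemma sumL_ext {A} (f g : A -> R) l : (forall x, In x l -> f x = g x) -> sumL f l = sumL g l.
Proof. induction l; intros H; simpl; auto. unfold sumL in *; simpl.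
  rewrite H by (left; auto). rewrite IHl; auto. intros; apply H; right; auto. Qed.
Lemma sumL_plus {A} (f g : A -> R) l : sumL (fun x => f x + g x) l = sumL f l + sumL g l.
Proof. induction l; simpl; [unfold sumL; simpl; ring|]. unfold sumL in *; simpl; rewrite IHl; ring. Qed.
Lemma sumL_minus {A} (f g : A -> R) l : sumL (fun x => f x - g x) l = sumL f l - sumL g l.
Proof. induction l; simpl; [unfold sumL; simpl; ring|]. unfold sumL in *; simpl; rewrite IHl; ring. Qed.
Lemma sumL_scal {A} (f : A -> R) c l : sumL (fun x => c * f x) l = c * sumL f l.
Proof. induction l; simpl; [unfold sumL; simpl; ring|]. unfold sumL in *; simpl; rewrite IHl; ring. Qed.
Lemma sumL_zero {A} (l : list A) : sumL (fun _ => 0) l = 0.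
Proof. induction l; simpl; auto. unfold sumL in *; simpl; rewrite IHl; ring. Qed.
Lemma sumL_swap {A B} (f : A -> B -> R) l1 l2 :
  sumL (fun x => sumL (fun y => f x y) l2) l1 = sumL (fun y => sumL (fun x => f x y) l1) l2.
Proof.
  induction l1; simpl.
  - symmetry. apply (sumL_zero l2).
  - change (sumL (fun y => f a y) l2 + sumL (fun x => sumL (fun y => f x y) l2) l1 =
            sumL (fun y => f a y + sumL (fun x => f x y) l1) l2).
    rewrite sumL_plus, IHl1. reflexivity.
Qed.

Lemma sumL_nonneg {A} (f : A -> R) l : (forall x, In x l -> 0 <= f x) -> 0 <= sumL f l.
Proof. induction l; intros H; simpl; [unfold sumL; simpl; lra|].
  change (0 <= f a + sumL f l). assert (0 <= f a) by (apply H; left; auto).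
  assert (0 <= sumL f l) by (apply IHl; intros; apply H; right; auto). lra. Qed.

Lemma states_len n s : In s (states n) <-> length s = n.
Proof.
  revert s; induction n; intros s; simpl.
  - split. intros [<-|[]]; auto. destruct s; simpl; try discriminate; auto.
  - rewrite in_app_iff, !in_map_iff. split.
    + intros [[x [<- Hx]]|[x [<- Hx]]]; simpl; f_equal; apply IHn; auto.
    + destruct s as [|b s]; simpl; try discriminate. intros H; injection H; intros H'.
      apply IHn in H'. destruct b; [left|right]; exists s; auto.
Qed.

Lemma sum_states_S m (f : list bool -> R) :
  sumL f (states (S m)) = sumL (fun r => f (true :: r)) (states m) + sumL (fun r => f (false :: r)) (states m).
Proof. simpl. rewrite sumL_app, !sumL_map. reflexivity. Qed.

Lemma sum_states_snoc m (f : list bool -> R) :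
  sumL f (states (S m)) = sumL (fun u => f (u ++ [true]) + f (u ++ [false])) (states m).
Proof.
  revert f; induction m; intros f.
  - simpl. unfold sumL; simpl. ring.
  - rewrite (sum_states_S (S m) f).
    rewrite (IHm (fun r => f (true :: r))), (IHm (fun r => f (false :: r))).
    rewrite sum_states_S. simpl. reflexivity.
Qed.

Lemma dec_cons {X} b a (x y : list bool) (A B : X) :
  (if list_eq_dec Bool.bool_dec (b :: x) (a :: y) then A else B) =
  (if Bool.eqb b a then (if list_eq_dec Bool.bool_dec x y then A else B) else B).
Proof.
  destruct (list_eq_dec Bool.bool_dec (b :: x) (a :: y)) as [E|E].
  - injection E; intros -> ->. rewrite Bool.eqb_reflx. destruct list_eq_dec; congruence.
  - destruct (Bool.eqb b a) eqn:Eb; auto. apply Bool.eqb_prop in Eb. subst.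
    destruct list_eq_dec; congruence.
Qed.

Lemma sum_ind n (u : list bool) (g : list bool -> R) : length u = n ->
  sumL (fun s => if list_eq_dec Bool.bool_dec u s then g s else 0) (states n) = g u.
Proof.
  revert u g; induction n; intros u g Hu.
  - destruct u; simpl in Hu; try discriminate. simpl. unfold sumL; simpl.
    ring.
  - destruct u as [|a u]; simpl in Hu; try discriminate. injection Hu; intros Hu'.
    rewrite sum_states_S.
    cbv beta. destruct a.
    + rewrite (sumL_ext (fun r => if list_eq_dec Bool.bool_dec (true :: u) (true :: r) then g (true :: r) else 0)
                        (fun r => if list_eq_dec Bool.bool_dec u r then g (true :: r) else 0))
        by (intros; rewrite dec_cons; reflexivity).
      rewrite (sumL_ext (fun r => if list_eq_dec Bool.bool_dec (true :: u) (false :: r) then g (false :: r) else 0) (fun r => 0))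
        by (intros; rewrite dec_cons; reflexivity).
      rewrite (IHn u (fun r => g (true :: r))) by auto. rewrite sumL_zero. ring.
    + rewrite (sumL_ext (fun r => if list_eq_dec Bool.bool_dec (false :: u) (true :: r) then g (true :: r) else 0) (fun r => 0))
        by (intros; rewrite dec_cons; reflexivity).
      rewrite (sumL_ext (fun r => if list_eq_dec Bool.bool_dec (false :: u) (false :: r) then g (false :: r) else 0)
                        (fun r => if list_eq_dec Bool.bool_dec u r then g (false :: r) else 0))
        by (intros; rewrite dec_cons; reflexivity).
      rewrite (IHn u (fun r => g (false :: r))) by auto. rewrite sumL_zero. ring.
Qed.

Lemma flips_len s t : In t (flips s) -> length t = length s.
Proof.
  revert t; induction s as [|a s IH]; simpl; intros t H; [contradiction|].
  apply in_app_iff in H. destruct H as [H|H].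
  - destruct a; simpl in H; [destruct H as [<-|[]]; reflexivity| contradiction].
  - apply in_map_iff in H. destruct H as [x [<- Hx]]. simpl. f_equal. auto.
Qed.

Lemma shift_len b s : length (shift b s) = length s.
Proof. unfold shift. rewrite firstn_length. simpl. lia. Qed.

Lemma jumps_len la lb d s rt : In rt (jumps la lb d s) -> length (snd rt) = length s.
Proof.
  unfold jumps. simpl. intros [<-|[<-|H]]; simpl; try apply shift_len.
  apply in_map_iff in H. destruct H as [x [<- Hx]]. simpl. apply flips_len; auto.
Qed.

Definition Gen la lb d (c : list bool -> R) (s : list bool) : R :=
  sumL (fun rt => fst rt * (c (snd rt) - c s)) (jumps la lb d s).

Lemma dual la lb d n (c p : list bool -> R) :
  sumL (fun s => c s * Lstar la lb d n p s) (states n) = sumL (fun s => p s * Gen la lb d c s) (states n).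
Proof.
  unfold Lstar, Gen.
  set (F := fun s' s => sumL (fun rt => if list_eq_dec Bool.bool_dec (snd rt) s then fst rt * p s' else 0)
                             (jumps la lb d s')).
  set (out := fun s => sumL (fun rt : R * list bool => fst rt) (jumps la lb d s)).
  transitivity (sumL (fun s => sumL (fun s' => c s * F s' s) (states n)) (states n)
                - sumL (fun s => c s * out s * p s) (states n)).
  { rewrite <- sumL_minus. apply sumL_ext. intros s _. rewrite sumL_scal. unfold F, out. ring. }
  transitivity (sumL (fun s => p s * sumL (fun rt => fst rt * c (snd rt)) (jumps la lb d s)) (states n)
                - sumL (fun s => c s * out s * p s) (states n)).
  2:{ rewrite <- sumL_minus. apply sumL_ext. intros s _.
      replace (sumL (fun rt : R * list bool => fst rt * (c (snd rt) - c s)) (jumps la lb d s))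
        with (sumL (fun rt => fst rt * c (snd rt)) (jumps la lb d s) - c s * out s).
      ring. unfold out. rewrite <- sumL_scal, <- sumL_minus. apply sumL_ext; intros; ring. }
  f_equal. rewrite sumL_swap. apply sumL_ext. intros s' Hs'.
  unfold F. transitivity (sumL (fun x => sumL (fun rt => c x * (if list_eq_dec Bool.bool_dec (snd rt) x then fst rt * p s' else 0)) (jumps la lb d s')) (states n)).
  { apply sumL_ext; intros; rewrite sumL_scal; reflexivity. }
  rewrite sumL_swap. rewrite <- sumL_scal. apply sumL_ext. intros rt Hrt.
  transitivity (sumL (fun x => if list_eq_dec Bool.bool_dec (snd rt) x then c x * (fst rt * p s') else 0) (states n)).
  { apply sumL_ext; intros; destruct list_eq_dec; ring. }
  rewrite sum_ind. ring.
  apply states_len in Hs'. rewrite <- Hs'. eapply jumps_len; eauto.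
Qed.

Definition m0 (s : list bool) : R := 1.
Definition m1 k (s : list bool) : R := if nth k s false then 1 else 0.
Definition m2 k (s : list bool) : R := if andb (nth k s false) (nth (S k) s false) then 1 else 0.

Lemma Gen_eq la lb d c s : Gen la lb d c s =
  la * (c (shift true s) - c s) + lb * (c (shift false s) - c s) + d * sumL (fun t => c t - c s) (flips s).
Proof. unfold Gen, jumps. rewrite !sumL_cons, sumL_map.
  rewrite (sumL_ext _ (fun t => d * (c t - c s))) by (intros; reflexivity).
  rewrite sumL_scal. simpl. ring. Qed.

Lemma fs1 k s : sumL (fun t => m1 k t - m1 k s) (flips s) = - m1 k s.
Proof.
  revert k; induction s as [|a s IH]; intros k.
  - unfold m1; simpl. destruct k; simpl; unfold sumL; simpl; ring.
  - simpl. rewrite sumL_app, sumL_map. destruct k as [|k].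
    + rewrite (sumL_ext (fun x => m1 0 (a::x) - m1 0 (a::s)) (fun _ => 0)) by (intros; unfold m1; simpl; destruct a; ring).
      rewrite sumL_zero. destruct a; unfold m1; simpl; unfold sumL; simpl; ring.
    + rewrite (sumL_ext (fun x => m1 (S k) (a::x) - m1 (S k) (a::s)) (fun t => m1 k t - m1 k s)) by (intros; unfold m1; simpl; ring).
      rewrite IH. destruct a; unfold m1; simpl; unfold sumL; simpl; ring.
Qed.

Lemma fs2 k s : sumL (fun t => m2 k t - m2 k s) (flips s) = - 2 * m2 k s.
Proof.
  revert k; induction s as [|a s IH]; intros k.
  - unfold m2; simpl. destruct k; simpl; unfold sumL; simpl; ring.
  - simpl. rewrite sumL_app, sumL_map. destruct k as [|k].
    + rewrite (sumL_ext (fun x => m2 0 (a::x) - m2 0 (a::s)) (fun t => (if a then 1 else 0) * (m1 0 t - m1 0 s)))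
        by (intros; unfold m2, m1; simpl; destruct a; simpl; ring).
      rewrite sumL_scal, fs1. destruct a; unfold m2, m1; simpl; unfold sumL; simpl; ring.
    + rewrite (sumL_ext (fun x => m2 (S k) (a::x) - m2 (S k) (a::s)) (fun t => m2 k t - m2 k s)) by (intros; unfold m2; simpl; ring).
      rewrite IH. destruct a; unfold m2; simpl; unfold sumL; simpl; ring.
Qed.

Lemma shift_cons b x r : shift b (x :: r) = b :: firstn (length r) (x :: r).
Proof. reflexivity. Qed.

Lemma G0 la lb d s : Gen la lb d m0 s = 0.
Proof. rewrite Gen_eq. unfold m0. rewrite (sumL_ext _ (fun _ => 0)) by (intros; ring).
  rewrite sumL_zero. ring. Qed.

Lemma G1_0 la lb d s : (1 <= length s)%nat -> Gen la lb d (m1 0) s = la - (la + lb + d) * m1 0 s.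
Proof.
  intros H. destruct s as [|x r]; simpl in H; [lia|].
  rewrite Gen_eq, fs1, !shift_cons. unfold m1; simpl. ring.
Qed.

Lemma G1_S la lb d k s : (S k < length s)%nat ->
  Gen la lb d (m1 (S k)) s = (la + lb) * m1 k s - (la + lb + d) * m1 (S k) s.
Proof.
  intros H. destruct s as [|x r]; simpl in H; [lia|].
  rewrite Gen_eq, fs1, !shift_cons.
  assert (E : forall b, m1 (S k) (b :: firstn (length r) (x :: r)) = m1 k (x :: r)).
  { intros b. unfold m1. simpl nth at 1. rewrite nth_firstn.
    replace (k <? length r)%nat with true by (symmetry; apply Nat.ltb_lt; lia). reflexivity. }
  rewrite !E. ring.
Qed.

Lemma G2_0 la lb d s : (2 <= length s)%nat -> Gen la lb d (m2 0) s = la * m1 0 s - (la + lb + 2 * d) * m2 0 s.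
Proof.
  intros H. destruct s as [|x [|y r]]; simpl in H; try lia.
  rewrite Gen_eq, fs2, !shift_cons. unfold m1, m2; simpl. destruct x, y; simpl; ring.
Qed.

Lemma G2_S la lb d k s : (S (S k) < length s)%nat ->
  Gen la lb d (m2 (S k)) s = (la + lb) * m2 k s - (la + lb + 2 * d) * m2 (S k) s.
Proof.
  intros H. destruct s as [|x r]; simpl in H; [lia|].
  rewrite Gen_eq, fs2, !shift_cons.
  assert (E : forall b, m2 (S k) (b :: firstn (length r) (x :: r)) = m2 k (x :: r)).
  { intros b. unfold m2. simpl nth at 1 2. rewrite !nth_firstn.
    replace (k <? length r)%nat with true by (symmetry; apply Nat.ltb_lt; lia).
    replace (S k <? length r)%nat with true by (symmetry; apply Nat.ltb_lt; lia). reflexivity. }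
  rewrite !E. ring.
Qed.

Definition M n (c q : list bool -> R) : R := sumL (fun s => c s * q s) (states n).

Lemma conv_scal f L c : conv f L -> conv (fun t => c * f t) (c * L).
Proof.
  intros H eps He. destruct (Req_dec c 0) as [->|Hc].
  - exists 0. intros. replace (0 * f t - 0 * L) with 0 by ring. rewrite Rabs_R0. lra.
  - destruct (H (eps / Rabs c)) as [T HT].
    { apply Rlt_gt, Rdiv_lt_0_compat; [lra| apply Rabs_pos_lt; auto]. }
    exists T. intros t Ht. specialize (HT t Ht).
    replace (c * f t - c * L) with (c * (f t - L)) by ring. rewrite Rabs_mult.
    assert (0 < Rabs c) by (apply Rabs_pos_lt; auto).
    apply Rmult_lt_compat_l with (r := Rabs c) in HT; auto.
    replace (Rabs c * (eps / Rabs c)) with eps in HT by (field; lra). lra.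
Qed.

Lemma conv_eq f L L' : conv f L -> L = L' -> conv f L'.
Proof. intros H <-; auto. Qed.

Lemma conv_ext f g L : conv f L -> (forall t, f t = g t) -> conv g L.
Proof. intros H E eps He. destruct (H eps He) as [T HT]. exists T. intros. rewrite <- E. auto. Qed.

Section Part2.
End Part2.

Lemma M_deriv la lb d (p : R -> nat -> list bool -> R) n c t :
  (forall n s t, In s (states n) ->
        derivable_pt_lim (fun u => p u n s) t (Lstar la lb d n (p t n) s)) ->
  derivable_pt_lim (fun u => M n c (p u n)) t (sumL (fun s => p t n s * Gen la lb d c s) (states n)).
Proof.
  intros H. rewrite <- dual. unfold M.
  assert (forall l, (forall s, In s l -> In s (states n)) ->
     derivable_pt_lim (fun u => sumL (fun s => c s * p u n s) l) t
        (sumL (fun s => c s * Lstar la lb d n (p t n) s) l)).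
  { induction l as [|a l IH]; intros Hl.
    - eapply dpl_ext. apply (derivable_pt_lim_const 0). intros; reflexivity. reflexivity.
    - eapply dpl_ext. apply derivable_pt_lim_plus.
      + eapply dpl_ext. apply derivable_pt_lim_scal. apply (H n a t). apply Hl; left; auto.
        intros; reflexivity. reflexivity.
      + apply IH. intros; apply Hl; right; auto.
      + intros; reflexivity.
      + reflexivity. }
  apply H0; auto.
Qed.

Lemma part2 la lb d (hla : 0 < la) (hlb : 0 < lb) (hd : 0 < d)
  (mu : nat -> list bool -> R) (p : R -> nat -> list bool -> R) :
  consistent_family mu ->
  (forall n s, p 0 n s = mu n s) ->
  (forall n s t, In s (states n) ->
        derivable_pt_lim (fun u => p u n s) t (Lstar la lb d n (p t n) s)) ->
  forall n,
  conv (fun t => M n m0 (p t n)) 1 /\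
  (forall k, (k < n)%nat -> conv (fun t => M n (m1 k) (p t n))
       (la / (la + lb) * ((la + lb) / (la + lb + d)) ^ (S k))) /\
  (forall k, (S k < n)%nat -> conv (fun t => M n (m2 k) (p t n))
       (la ^ 2 / ((la + lb) * (la + lb + d)) * ((la + lb) / (la + lb + 2 * d)) ^ (S k))).
Proof.
  intros [Hprob _] H0 Hder n.
  assert (Der : forall c t, derivable_pt_lim (fun u => M n c (p u n)) t
             (sumL (fun s => p t n s * Gen la lb d c s) (states n))).
  { intros; apply M_deriv; auto. }
  assert (C0 : forall t, 0 <= t -> M n m0 (p t n) = 1).
  { intros t Ht.
    assert (D0 : forall t, derivable_pt_lim (fun u => M n m0 (p u n)) t 0).
    { intros t'. eapply dpl_ext. apply Der. intros; reflexivity.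
      rewrite (sumL_ext _ (fun _ => 0)). apply sumL_zero. intros; rewrite G0; ring. }
    assert (A1 := nonincr (fun u => M n m0 (p u n)) (fun _ => 0) 0 D0 ltac:(intros; lra) t Ht).
    assert (D0' : forall t, derivable_pt_lim (fun u => - M n m0 (p u n)) t (- 0)).
    { intros. eapply dpl_ext. apply derivable_pt_lim_opp, D0. intros; reflexivity. reflexivity. }
    assert (A2 := nonincr (fun u => - M n m0 (p u n)) (fun _ => - 0) 0 D0' ltac:(intros; lra) t Ht).
    simpl in A1, A2.
    assert (M n m0 (p 0 n) = 1).
    { unfold M. destruct (Hprob n) as [_ Hs]. rewrite <- Hs. apply sumL_ext; intros.
      rewrite H0. unfold m0. ring. }
    lra. }
  assert (Conv0 : conv (fun t => M n m0 (p t n)) 1).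
  { intros eps He. exists 0. intros t Ht. rewrite C0 by lra.
    replace (1 - 1) with 0 by ring. rewrite Rabs_R0. lra. }
  assert (Hlam : 0 < la + lb) by lra.
  assert (Conv1 : forall k, (k < n)%nat -> conv (fun t => M n (m1 k) (p t n))
       (la / (la + lb) * ((la + lb) / (la + lb + d)) ^ (S k))).
  { induction k as [|k IH]; intros Hk.
    - eapply conv_eq. apply (conv_ode _ (fun t => la * M n m0 (p t n)) (la + lb + d) la).
      lra.
      + intros t. eapply dpl_ext. apply Der. intros; reflexivity.
        unfold M. rewrite <- sumL_scal, <- sumL_scal, <- sumL_minus. apply sumL_ext.
        intros s Hs. apply states_len in Hs. rewrite G1_0 by lia. unfold m0. ring.
      + eapply conv_eq. apply conv_scal, Conv0. ring.
      + simpl. field. lra.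
    - eapply conv_eq. apply (conv_ode _ (fun t => (la + lb) * M n (m1 k) (p t n)) (la + lb + d)
         ((la + lb) * (la / (la + lb) * ((la + lb) / (la + lb + d)) ^ (S k)))).
      lra.
      + intros t. eapply dpl_ext. apply Der. intros; reflexivity.
        unfold M. rewrite <- sumL_scal, <- sumL_scal, <- sumL_minus. apply sumL_ext.
        intros s Hs. apply states_len in Hs. rewrite G1_S by lia. ring.
      + apply conv_scal, IH. lia.
      + change (((la + lb) / (la + lb + d)) ^ S (S k)) with
          (((la + lb) / (la + lb + d)) * ((la + lb) / (la + lb + d)) ^ (S k)).
        field. lra. }
  split; [auto|split; [auto|]].
  induction k as [|k IH]; intros Hk.
  - eapply conv_eq. apply (conv_ode _ (fun t => la * M n (m1 0) (p t n)) (la + lb + 2 * d)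
       (la * (la / (la + lb) * ((la + lb) / (la + lb + d)) ^ 1))).
    lra.
    + intros t. eapply dpl_ext. apply Der. intros; reflexivity.
      unfold M. rewrite <- sumL_scal, <- sumL_scal, <- sumL_minus. apply sumL_ext.
      intros s Hs. apply states_len in Hs. rewrite G2_0 by lia. ring.
    + apply conv_scal, Conv1. lia.
    + simpl. field. lra.
  - eapply conv_eq. apply (conv_ode _ (fun t => (la + lb) * M n (m2 k) (p t n)) (la + lb + 2 * d)
       ((la + lb) * (la ^ 2 / ((la + lb) * (la + lb + d)) * ((la + lb) / (la + lb + 2 * d)) ^ (S k)))).
    lra.
    + intros t. eapply dpl_ext. apply Der. intros; reflexivity.
      unfold M. rewrite <- sumL_scal, <- sumL_scal, <- sumL_minus. apply sumL_ext.
      intros s Hs. apply states_len in Hs. rewrite G2_S by lia. ring.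
    + apply conv_scal, IH. lia.
    + change (((la + lb) / (la + lb + 2 * d)) ^ S (S k)) with
        (((la + lb) / (la + lb + 2 * d)) * ((la + lb) / (la + lb + 2 * d)) ^ (S k)).
      field. lra.
Qed.

Fixpoint upflips (s : list bool) : list (list bool) :=
  match s with
  | nil => nil
  | a :: s' => (if a then nil else [true :: s']) ++ map (cons a) (upflips s')
  end.

Fixpoint ones (s : list bool) : nat :=
  match s with nil => O | a :: s' => ((if a then 1 else 0) + ones s')%nat end.
Fixpoint zeros (s : list bool) : nat :=
  match s with nil => O | a :: s' => ((if a then 0 else 1) + zeros s')%nat end.

Definition rate (la lb : R) (b : bool) : R := if b then la else lb.

Fixpoint piZ la lb d (prev : list bool -> R) (k : nat) (s : list bool) {struct k} : R :=
  match k with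
  | O => 0
  | S k' => (rate la lb (hd false s) * prev (tl s) + d * sumL (piZ la lb d prev k') (upflips s))
            / (la + lb + d * INR (ones s))
  end.

Fixpoint piN la lb d (n : nat) : list bool -> R :=
  match n with
  | O => fun _ => 1
  | S m => piZ la lb d (piN la lb d m) (S (S m))
  end.

Lemma upflips_prop s v : In v (upflips s) -> length v = length s /\ S (zeros v) = zeros s.
Proof.
  revert v; induction s as [|a s IH]; simpl; intros v H; [contradiction|].
  apply in_app_iff in H. destruct H as [H|H].
  - destruct a; simpl in H; [contradiction|]. destruct H as [<-|[]]. simpl. split; auto.
  - apply in_map_iff in H. destruct H as [x [<- Hx]]. apply IH in Hx. simpl. destruct Hx as [H1 H2].
    split; [lia|]. destruct a; simpl; lia.
Qed.

Lemma length_flips s : length (flips s) = ones s.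
Proof. induction s as [|a s IH]; simpl; auto. rewrite length_app, length_map, IH. destruct a; simpl; lia. Qed.

Lemma sum_upflips_snoc (f : list bool -> R) u x :
  sumL f (upflips (u ++ [x])) = sumL (fun v => f (v ++ [x])) (upflips u) + (if x then 0 else f (u ++ [true])).
Proof.
  revert f; induction u as [|a u IH]; intros f; simpl.
  - destruct x; simpl; unfold sumL; simpl; ring.
  - rewrite !sumL_app, !sumL_map. rewrite (IH (fun v => f (a :: v))).
    destruct a; simpl; unfold sumL; simpl; ring.
Qed.

Lemma ones_snoc u x : ones (u ++ [x]) = (ones u + (if x then 1 else 0))%nat.
Proof. induction u as [|a u IH]; simpl; [destruct x; auto|]. rewrite IH. lia. Qed.

Lemma zeros_le s : (zeros s <= length s)%nat.
Proof. induction s as [|a s IH]; simpl; [lia|]. destruct a; lia. Qed.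

Lemma den_pos la lb d s : 0 < la -> 0 < lb -> 0 < d -> 0 < la + lb + d * INR (ones s).
Proof. intros. pose proof (pos_INR (ones s)). nra. Qed.

Lemma piZ_fuel la lb d prev k k' s : (zeros s < k)%nat -> (zeros s < k')%nat ->
  piZ la lb d prev k s = piZ la lb d prev k' s.
Proof.
  revert k' s; induction k as [|k IH]; intros k' s H1 H2; [lia|].
  destruct k' as [|k']; [lia|]. simpl. f_equal. f_equal. f_equal.
  apply sumL_ext. intros v Hv. apply upflips_prop in Hv. apply IH; lia.
Qed.

Lemma piN_eq la lb d m s : 0 < la -> 0 < lb -> 0 < d -> length s = S m ->
  (la + lb + d * INR (ones s)) * piN la lb d (S m) s =
  rate la lb (hd false s) * piN la lb d m (tl s) + d * sumL (piN la lb d (S m)) (upflips s).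
Proof.
  intros hla hlb hd Hs. pose proof (den_pos la lb d s hla hlb hd).
  change (piN la lb d (S m)) with (piZ la lb d (piN la lb d m) (S (S m))).
  simpl piZ at 1.
  rewrite (sumL_ext (piZ la lb d (piN la lb d m) (S m)) (piZ la lb d (piN la lb d m) (S (S m)))).
  field. lra.
  intros v Hv. apply upflips_prop in Hv. pose proof (zeros_le s). apply piZ_fuel; lia.
Qed.

Lemma piZ_uniq la lb d n (prev q : list bool -> R) : 0 < la -> 0 < lb -> 0 < d ->
  (forall s, length s = n -> (la + lb + d * INR (ones s)) * q s =
      rate la lb (hd false s) * prev (tl s) + d * sumL q (upflips s)) ->
  forall k s, length s = n -> (zeros s < k)%nat -> q s = piZ la lb d prev k s.
Proof.
  intros hla hlb hd Hq k. induction k as [|k IH]; intros s Hs Hz; [lia|].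
  simpl. pose proof (den_pos la lb d s hla hlb hd).
  rewrite (sumL_ext (piZ la lb d prev k) q).
  - apply Rmult_eq_reg_l with (la + lb + d * INR (ones s)); [|lra].
    rewrite Hq by auto. field. lra.
  - intros v Hv. apply upflips_prop in Hv. symmetry. apply IH; lia.
Qed.

Lemma piZ_nonneg la lb d prev k s : 0 < la -> 0 < lb -> 0 < d -> (forall s, 0 <= prev s) ->
  0 <= piZ la lb d prev k s.
Proof.
  intros hla hlb hdd Hp. revert s; induction k as [|k IH]; intros s; simpl; [lra|].
  pose proof (den_pos la lb d s hla hlb hdd).
  apply Rle_mult_inv_pos; auto.
  assert (0 <= rate la lb (hd false s)) by (unfold rate; destruct (hd false s); lra).
  assert (0 <= sumL (piZ la lb d prev k) (upflips s)) by (apply sumL_nonneg; auto).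
  specialize (Hp (tl s)). nra.
Qed.

Lemma piN_nonneg la lb d n s : 0 < la -> 0 < lb -> 0 < d -> 0 <= piN la lb d n s.
Proof.
  intros hla hlb hd. revert s; induction n; intros s; [simpl; lra|].
  change (piN la lb d (S n)) with (piZ la lb d (piN la lb d n) (S (S n))).
  apply piZ_nonneg; auto.
Qed.

Lemma piN_cons la lb d m u : 0 < la -> 0 < lb -> 0 < d -> length u = m ->
  piN la lb d m u = piN la lb d (S m) (u ++ [true]) + piN la lb d (S m) (u ++ [false]).
Proof.
  intros hla hlb hd. revert u; induction m as [|k IH]; intros u Hu.
  - destruct u; simpl in Hu; try discriminate. simpl app.
    simpl. unfold rate, sumL; simpl. field. split; lra.
  - symmetry.
    set (q := fun v => piN la lb d (S (S k)) (v ++ [true]) + piN la lb d (S (S k)) (v ++ [false])).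
    change (q u = piN la lb d (S k) u).
    change (piN la lb d (S k)) with (piZ la lb d (piN la lb d k) (S (S k))).
    apply (piZ_uniq la lb d (S k)); auto.
    2:{ pose proof (zeros_le u). lia. }
    intros s Hs. destruct s as [|a w]; simpl in Hs; try discriminate. injection Hs; intros Hw.
    pose proof (piN_eq la lb d (S k) ((a :: w) ++ [true]) hla hlb hd) as Et.
    pose proof (piN_eq la lb d (S k) ((a :: w) ++ [false]) hla hlb hd) as Ef.
    specialize (Et ltac:(rewrite length_app; simpl; lia)).
    specialize (Ef ltac:(rewrite length_app; simpl; lia)).
    rewrite sum_upflips_snoc, ones_snoc, plus_INR in Et, Ef.
    unfold q. rewrite sumL_plus.
    cbn [List.hd List.tl app] in Et, Ef |- *.
    rewrite (IH w Hw).
    change (INR 1) with 1 in Et. change (INR 0) with 0 in Ef.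
    nra.
Qed.

Lemma sum_ind' n (u : list bool) (g : list bool -> R) : length u = n ->
  sumL (fun s => if list_eq_dec Bool.bool_dec s u then g s else 0) (states n) = g u.
Proof.
  intros H. rewrite <- (sum_ind n u g H). apply sumL_ext. intros s _.
  destruct (list_eq_dec Bool.bool_dec s u), (list_eq_dec Bool.bool_dec u s); subst; congruence.
Qed.

Lemma firstn_snoc (w : list bool) x : firstn (length w) (w ++ [x]) = w.
Proof. induction w; simpl; f_equal; auto. Qed.

Lemma shift_snoc b (w : list bool) x : shift b (w ++ [x]) = b :: w.
Proof. unfold shift. rewrite length_app. simpl. rewrite Nat.add_1_r. simpl. rewrite firstn_snoc. auto. Qed.

Lemma sum_shift m b r (p : list bool -> R) a u : length u = m ->
  sumL (fun s' => if list_eq_dec Bool.bool_dec (shift b s') (a :: u) then r * p s' else 0) (states (S m)) =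
  if Bool.eqb b a then r * (p (u ++ [true]) + p (u ++ [false])) else 0.
Proof.
  intros Hu. rewrite sum_states_snoc.
  rewrite (sumL_ext _ (fun w => if Bool.eqb b a then
      (if list_eq_dec Bool.bool_dec w u then r * (p (w ++ [true]) + p (w ++ [false])) else 0) else 0)).
  - destruct (Bool.eqb b a).
    + apply sum_ind'; auto.
    + apply sumL_zero.
  - intros w _. rewrite !shift_snoc, !dec_cons. destruct (Bool.eqb b a); [|ring].
    destruct list_eq_dec; ring.
Qed.

Lemma sum_flip m (p : list bool -> R) s : length s = m ->
  sumL (fun s' => sumL (fun t => if list_eq_dec Bool.bool_dec t s then p s' else 0) (flips s')) (states m) =
  sumL p (upflips s).
Proof.
  revert p s; induction m as [|m IH]; intros p s Hs.
  - destruct s; simpl in Hs; try discriminate. simpl. unfold sumL; simpl. ring.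
  - destruct s as [|a u]; simpl in Hs; try discriminate. injection Hs; intros Hu.
    rewrite sum_states_S. cbn [flips upflips].
    rewrite (sumL_ext (fun r => sumL _ ((if true then [false :: r] else []) ++ map (cons true) (flips r)))
       (fun r => (if list_eq_dec Bool.bool_dec r u then (if a then 0 else p (true :: r)) else 0)
                 + (if a then sumL (fun t => if list_eq_dec Bool.bool_dec t u then p (true :: r) else 0) (flips r) else 0))).
    rewrite (sumL_ext (fun r => sumL _ ((if false then [false :: r] else []) ++ map (cons false) (flips r)))
       (fun r => (if a then 0 else sumL (fun t => if list_eq_dec Bool.bool_dec t u then p (false :: r) else 0) (flips r)))).
    + rewrite sumL_plus. rewrite sumL_app, sumL_map.
      destruct a.
      * rewrite (sumL_ext (fun r => if list_eq_dec Bool.bool_dec r u then 0 else 0) (fun _ => 0))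
          by (intros; destruct list_eq_dec; auto).
        rewrite (IH (fun r => p (true :: r)) u Hu). rewrite !sumL_zero. simpl. unfold sumL; simpl. ring.
      * rewrite (sum_ind' m u (fun r => p (true :: r)) Hu).
        rewrite (IH (fun r => p (false :: r)) u Hu). rewrite sumL_zero. simpl. unfold sumL; simpl. ring.
    + intros r _. rewrite sumL_app, sumL_map. cbv beta.
      destruct a.
      * rewrite (sumL_ext (fun x => if list_eq_dec Bool.bool_dec (false :: x) (true :: u) then p (false :: r) else 0) (fun _ => 0)) by (intros; rewrite dec_cons; reflexivity). rewrite sumL_zero.
        simpl. unfold sumL; simpl. ring.
      * rewrite (sumL_ext (fun x => if list_eq_dec Bool.bool_dec (false :: x) (false :: u) then p (false :: r) else 0) (fun t => if list_eq_dec Bool.bool_dec t u then p (false :: r) else 0))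
          by (intros; rewrite dec_cons; reflexivity).
        simpl. unfold sumL; simpl. ring.
    + intros r _. rewrite sumL_app, sumL_map. cbv beta.
      rewrite (sumL_ext (fun x => if list_eq_dec Bool.bool_dec (true :: x) (a :: u) then p (true :: r) else 0)
           (fun t => if a then (if list_eq_dec Bool.bool_dec t u then p (true :: r) else 0) else 0))
        by (intros; rewrite dec_cons; destruct a; reflexivity).
      cbn iota beta. rewrite sumL_cons, sumL_nil. rewrite dec_cons.
      destruct a; cbn iota beta; cbn [Bool.eqb].
      * destruct (list_eq_dec Bool.bool_dec r u); ring.
      * rewrite sumL_zero. ring.
Qed.

Lemma sum_fst_map (d : R) (l : list (list bool)) :
  sumL (fun rt : R * list bool => fst rt) (map (fun t => (d, t)) l) = d * INR (length l).
Proof. induction l; [unfold sumL; simpl; ring|]. cbn [map]. rewrite sumL_cons, IHl. cbn [fst length].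
  rewrite S_INR. ring. Qed.

Lemma Lstar_eq la lb d m p a u : length u = m ->
  Lstar la lb d (S m) p (a :: u) =
  rate la lb a * (p (u ++ [true]) + p (u ++ [false])) + d * sumL p (upflips (a :: u))
  - (la + lb + d * INR (ones (a :: u))) * p (a :: u).
Proof.
  intros Hu. unfold Lstar.
  rewrite (sumL_ext _ (fun s' =>
     (if list_eq_dec Bool.bool_dec (shift true s') (a :: u) then la * p s' else 0) +
     ((if list_eq_dec Bool.bool_dec (shift false s') (a :: u) then lb * p s' else 0) +
      sumL (fun t => if list_eq_dec Bool.bool_dec t (a :: u) then d * p s' else 0) (flips s')))).
  2:{ intros s' _. unfold jumps. rewrite !sumL_cons, sumL_map. reflexivity. }
  rewrite !sumL_plus.
  rewrite (sum_shift m true la p a u Hu), (sum_shift m false lb p a u Hu).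
  rewrite (sum_flip (S m) (fun s' => d * p s') (a :: u)) by (simpl; auto).
  rewrite sumL_scal.
  unfold jumps. rewrite !sumL_cons, sum_fst_map, length_flips. cbn [fst].
  destruct a; unfold rate; cbn [Bool.eqb]; ring.
Qed.

Lemma Lstar_nil la lb d p : Lstar la lb d 0 p [] = 0.
Proof.
  unfold Lstar, jumps. simpl. unfold sumL; simpl. ring.
Qed.

Lemma pi_stat la lb d n s : 0 < la -> 0 < lb -> 0 < d -> In s (states n) ->
  Lstar la lb d n (piN la lb d n) s = 0.
Proof.
  intros hla hlb hd Hs. apply states_len in Hs.
  destruct n as [|m].
  - destruct s; simpl in Hs; try discriminate. apply Lstar_nil.
  - destruct s as [|a u]; simpl in Hs; try discriminate. injection Hs; intros Hu.
    rewrite Lstar_eq by auto.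
    rewrite <- (piN_cons la lb d m u hla hlb hd Hu).
    pose proof (piN_eq la lb d m (a :: u) hla hlb hd ltac:(simpl; auto)) as E.
    cbn [List.hd List.tl] in E. lra.
Qed.

Lemma pi_sum1 la lb d n : 0 < la -> 0 < lb -> 0 < d -> sumL (piN la lb d n) (states n) = 1.
Proof.
  intros hla hlb hd. induction n as [|m IH].
  - simpl. unfold sumL; simpl. ring.
  - rewrite sum_states_snoc. rewrite <- IH. apply sumL_ext. intros u Hu.
    apply states_len in Hu. symmetry. apply piN_cons; auto.
Qed.

Lemma pf_M (p : nat -> list bool -> R) i : prob_fast p i = M i (m1 (pred i)) (p i).
Proof. unfold prob_fast, M, m1. apply sumL_ext. intros. destruct nth; ring. Qed.

Lemma pf2_M (p : nat -> list bool -> R) i : (1 <= i)%nat -> prob_fast2 p i = M (S i) (m2 (pred i)) (p (S i)).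
Proof. intros Hi. unfold prob_fast2, M, m2. replace (S (pred i)) with i by lia.
  apply sumL_ext. intros. destruct andb; ring. Qed.

Lemma stat_mom la lb d n c : 0 < la -> 0 < lb -> 0 < d ->
  sumL (fun s => piN la lb d n s * Gen la lb d c s) (states n) = 0.
Proof.
  intros. rewrite <- dual. rewrite (sumL_ext _ (fun _ => 0)). apply sumL_zero.
  intros s Hs. rewrite pi_stat; auto. ring.
Qed.

Lemma part1 la lb d (hla : 0 < la) (hlb : 0 < lb) (hd : 0 < d) n :
  (forall k, (k < n)%nat -> M n (m1 k) (piN la lb d n) =
       la / (la + lb) * ((la + lb) / (la + lb + d)) ^ (S k)) /\
  (forall k, (S k < n)%nat -> M n (m2 k) (piN la lb d n) =
       la ^ 2 / ((la + lb) * (la + lb + d)) * ((la + lb) / (la + lb + 2 * d)) ^ (S k)).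
Proof.
  assert (H0 : M n m0 (piN la lb d n) = 1).
  { unfold M. transitivity (sumL (piN la lb d n) (states n)).
    apply sumL_ext; intros; unfold m0; ring. apply pi_sum1; auto. }
  assert (Hlam : 0 < la + lb) by lra.
  assert (C1 : forall k, (k < n)%nat -> M n (m1 k) (piN la lb d n) =
       la / (la + lb) * ((la + lb) / (la + lb + d)) ^ (S k)).
  { induction k as [|k IH]; intros Hk.
    - pose proof (stat_mom la lb d n (m1 0) hla hlb hd) as S0.
      rewrite (sumL_ext _ (fun s => la * (m0 s * piN la lb d n s) - (la + lb + d) * (m1 0 s * piN la lb d n s))) in S0.
      2:{ intros s Hs. apply states_len in Hs. rewrite G1_0 by lia. unfold m0. ring. }
      rewrite sumL_minus, !sumL_scal in S0. fold (M n m0 (piN la lb d n)) in S0.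
      fold (M n (m1 0) (piN la lb d n)) in S0. rewrite H0 in S0.
      apply Rmult_eq_reg_l with (la + lb + d); [|lra]. simpl. assert (E : (la + lb + d) * M n (m1 0) (piN la lb d n) = la * 1) by lra. rewrite E. field. lra.
    - pose proof (stat_mom la lb d n (m1 (S k)) hla hlb hd) as S0.
      rewrite (sumL_ext _ (fun s => (la + lb) * (m1 k s * piN la lb d n s) - (la + lb + d) * (m1 (S k) s * piN la lb d n s))) in S0.
      2:{ intros s Hs. apply states_len in Hs. rewrite G1_S by lia. ring. }
      rewrite sumL_minus, !sumL_scal in S0.
      fold (M n (m1 k) (piN la lb d n)) in S0.
      fold (M n (m1 (S k)) (piN la lb d n)) in S0. rewrite IH in S0 by lia.
      apply Rmult_eq_reg_l with (la + lb + d); [|lra].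
      change (((la + lb) / (la + lb + d)) ^ S (S k)) with
          (((la + lb) / (la + lb + d)) * ((la + lb) / (la + lb + d)) ^ (S k)).
      set (X := M n (m1 (S k)) (piN la lb d n)) in *.
      assert (E : (la + lb + d) * X = (la + lb) * (la / (la + lb) * ((la + lb) / (la + lb + d)) ^ S k)) by lra.
      rewrite E. field. lra. }
  split; auto.
  induction k as [|k IH]; intros Hk.
  - pose proof (stat_mom la lb d n (m2 0) hla hlb hd) as S0.
    rewrite (sumL_ext _ (fun s => la * (m1 0 s * piN la lb d n s) - (la + lb + 2 * d) * (m2 0 s * piN la lb d n s))) in S0.
    2:{ intros s Hs. apply states_len in Hs. rewrite G2_0 by lia. ring. }
    rewrite sumL_minus, !sumL_scal in S0.
    fold (M n (m1 0) (piN la lb d n)) in S0.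
    fold (M n (m2 0) (piN la lb d n)) in S0. rewrite C1 in S0 by lia.
    apply Rmult_eq_reg_l with (la + lb + 2 * d); [|lra].
    assert (E : (la + lb + 2 * d) * M n (m2 0) (piN la lb d n) = la * (la / (la + lb) * ((la + lb) / (la + lb + d)) ^ 1)) by lra.
    rewrite E. simpl. field. lra.
  - pose proof (stat_mom la lb d n (m2 (S k)) hla hlb hd) as S0.
    rewrite (sumL_ext _ (fun s => (la + lb) * (m2 k s * piN la lb d n s) - (la + lb + 2 * d) * (m2 (S k) s * piN la lb d n s))) in S0.
    2:{ intros s Hs. apply states_len in Hs. rewrite G2_S by lia. ring. }
    rewrite sumL_minus, !sumL_scal in S0.
    fold (M n (m2 k) (piN la lb d n)) in S0.
    fold (M n (m2 (S k)) (piN la lb d n)) in S0. rewrite IH in S0 by lia.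
    apply Rmult_eq_reg_l with (la + lb + 2 * d); [|lra].
    set (X := M n (m2 (S k)) (piN la lb d n)) in *.
    assert (E : (la + lb + 2 * d) * X = (la + lb) * (la ^ 2 / ((la + lb) * (la + lb + d)) * ((la + lb) / (la + lb + 2 * d)) ^ S k)) by lra.
    rewrite E.
    change (((la + lb) / (la + lb + 2 * d)) ^ S (S k)) with
        (((la + lb) / (la + lb + 2 * d)) * ((la + lb) / (la + lb + 2 * d)) ^ (S k)).
    field. lra.
Qed.
Theorem mainTheorem8 (la lb d : R) (hla : 0 < la) (hlb : 0 < lb) (hd : 0 < d) :
  (exists pi : nat -> list bool -> R,
     consistent_family pi /\
     (forall n s, In s (states n) -> Lstar la lb d n (pi n) s = 0) /\
     (forall i : nat, (1 <= i)%nat ->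
        prob_fast pi i = la / (la + lb) * ((la + lb) / (la + lb + d)) ^ i /\
        prob_fast2 pi i =
          la ^ 2 / ((la + lb) * (la + lb + d)) * ((la + lb) / (la + lb + 2 * d)) ^ i))
  /\
  (forall (mu : nat -> list bool -> R) (p : R -> nat -> list bool -> R),
     consistent_family mu ->
     (forall n s, p 0 n s = mu n s) ->
     (forall n s t, In s (states n) ->
        derivable_pt_lim (fun u => p u n s) t (Lstar la lb d n (p t n) s)) ->
     forall i : nat, (1 <= i)%nat ->
       (forall eps, eps > 0 -> exists T, forall t, t >= T ->
          Rabs (prob_fast (p t) i - la / (la + lb) * ((la + lb) / (la + lb + d)) ^ i) < eps) /\
       (forall eps, eps > 0 -> exists T, forall t, t >= T ->
          Rabs (prob_fast2 (p t) i -
                la ^ 2 / ((la + lb) * (la + lb + d)) * ((la + lb) / (la + lb + 2 * d)) ^ i) < eps)).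
Proof.
  split.
  - exists (piN la lb d). split; [|split].
    + split.
      * intros n. split.
        -- intros s _. apply piN_nonneg; auto.
        -- apply pi_sum1; auto.
      * intros n s Hs. apply states_len in Hs. apply piN_cons; auto.
    + intros n s Hs. apply pi_stat; auto.
    + intros i Hi. split.
      * rewrite pf_M. destruct (part1 la lb d hla hlb hd i) as [P1 _].
        rewrite P1 by lia. replace (S (pred i)) with i by lia. reflexivity.
      * rewrite pf2_M by auto. destruct (part1 la lb d hla hlb hd (S i)) as [_ P2].
        rewrite P2 by lia. replace (S (pred i)) with i by lia. reflexivity.
  - intros mu p Hmu Hp0 Hder i Hi. split.
    + destruct (part2 la lb d hla hlb hd mu p Hmu Hp0 Hder i) as [_ [P1 _]].
      specialize (P1 (pred i) ltac:(lia)). replace (S (pred i)) with i in P1 by lia.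
      apply (conv_ext _ _ _ P1). intros t. rewrite pf_M. reflexivity.
    + destruct (part2 la lb d hla hlb hd mu p Hmu Hp0 Hder (S i)) as [_ [_ P2]].
      specialize (P2 (pred i) ltac:(lia)). replace (S (pred i)) with i in P2 by lia.
      apply (conv_ext _ _ _ P2). intros t. rewrite pf2_M by auto. reflexivity.
Qed.
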